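(* Let $R$ be a $\sigma$-(sps) Armendariz ring, where $\sigma$ is an endomorphism of $R$. Let $f=\sum_{i=0}^\infty a_ix^i$, $g=\sum_{j=0}^\infty b_jx^j$, $h=\sum_{k=0}^\infty c_kx^k\in R[[x;\sigma]]$. If $fgh=0$, then $a_ib_jc_k=0$ for all $i,j,k\ge 0$.
   Context: All rings are associative with identity; $\sigma$ denotes a nonzero, non-identity ring endomorphism of $R$. The skew power series ring $R[[x;\sigma]]$ consists of all formal series $\sum_{i=0}^\infty a_i x^i$ with $a_i\in R$, added termwise and multiplied using distributivity and the rule $xa=\sigma(a)x$ for $a\in R$. A ring $R$ is $\sigma$-(sps) Armendariz if whenever $p=\sum_{i=0}^\infty a_ix^i$ and $q=\sum_{j=0}^\infty b_jx^j$ in $R[[x;\sigma]]$ satisfy $pq=0$, then $a_ib_j=0$ for all $i,j$. *)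

(* Defs.v *)
From HB Require Import structures.
From mathcomp Require Import all_boot all_order all_algebra.
Set Implicit Arguments. Unset Strict Implicit. Unset Printing Implicit Defensive.
Import GRing.Theory.
Local Open Scope ring_scope.

(* A skew power series sum_i a_i x^i in R[[x;sigma]] is represented by its
   coefficient sequence i |-> a_i. *)
Definition sps (R : nzRingType) := nat -> R.

(* Multiplication in R[[x;sigma]]: using x a = sigma(a) x, hence
   (a_i x^i)(b_j x^j) = a_i sigma^i(b_j) x^(i+j), so the n-th coefficient of
   p q is sum_{i=0}^n a_i sigma^i(b_(n-i)). *)
Definition spmul (R : nzRingType) (s : R -> R) (p q : sps R) : sps R :=
  fun n => \sum_(i < n.+1) p i * iter i s (q (n - i)%N).

Definition sps_zero (R : nzRingType) (p : sps R) : Prop := forall n, p n = 0.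

Definition sps_armendariz (R : nzRingType) (s : {rmorphism R -> R}) : Prop :=
  forall p q : sps R, sps_zero (spmul s p q) -> forall i j, p i * q j = 0.

(* Main.v *)
Require Import Defs.
From HB Require Import structures.
From mathcomp Require Import all_boot all_order all_algebra.
Import GRing.Theory.
Local Open Scope ring_scope.

Lemma iter_rmM (R : nzRingType) (s : {rmorphism R -> R}) k (x y : R) :
  iter k s (x * y) = iter k s x * iter k s y.
Proof. by elim: k => //= k IH; rewrite IH rmorphM. Qed.

Lemma iter_rmsum (R : nzRingType) (s : {rmorphism R -> R}) k m (F : 'I_m -> R) :
  iter k s (\sum_(i < m) F i) = \sum_(i < m) iter k s (F i).
Proof. by elim: k => //= k IH; rewrite IH rmorph_sum. Qed.

Lemma shift_sum (R : nzRingType) (F : nat -> R) l n : (l <= n)%N ->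
  \sum_(i < n.+1 | (l < i.+1)%N) F i = \sum_(m < (n - l).+1) F (m + l)%N.
Proof.
move=> hl; rewrite (eq_bigl (fun i : 'I_n.+1 => xpredT i && (l <= i)%N)) // -(@big_geq_mkord _ _ _ l n.+1 xpredT F) -{1}(add0n l) big_addn big_mkord.
by rewrite subSn.
Qed.

Lemma spmul_assoc (R : nzRingType) (s : {rmorphism R -> R}) (p q r : sps R) n :
  spmul s (spmul s p q) r n = spmul s p (spmul s q r) n.
Proof.
rewrite /spmul.
under eq_bigr => i _.
  rewrite mulr_suml (big_ord_widen n.+1 (fun l => p l * iter l s (q (i - l)%N) * iter i s (r (n - i)%N)) (ltn_ord i)).
  over.
rewrite /=. under eq_bigr => i _ do rewrite big_mkcond. rewrite exchange_big. under eq_bigr => l _ do rewrite -big_mkcond.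
apply: eq_bigr => l _.
rewrite iter_rmsum mulr_sumr.
rewrite (@shift_sum _ (fun i => p l * iter l s (q (i - l)%N) * iter i s (r (n - i)%N))); last by rewrite -ltnS.
apply: congr_big => // m _.
by rewrite iter_rmM mulrA addnK -iterD addnC subnDA.
Qed.

Theorem lemma2p4 (R : nzRingType) (s : {rmorphism R -> R})
  (s_nonzero : exists r : R, s r <> 0)
  (s_nonid : exists r : R, s r <> r)
  (HA : sps_armendariz s) (f g h : sps R) :
  sps_zero (spmul s (spmul s f g) h) ->
  forall i j k : nat, f i * g j * h k = 0.
Proof.
move=> H0 i j k.
have H1 : sps_zero (spmul s f (spmul s g h)) by move=> n; rewrite -spmul_assoc.
have H2 := HA _ _ H1 i.
pose G : sps R := fun m => f i * g m.
suff : sps_zero (spmul s G h) by move/HA; apply.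
move=> n; transitivity (f i * spmul s g h n); last exact: H2.
rewrite /spmul mulr_sumr.
by apply: eq_bigr => l _; rewrite mulrA.
Qed.
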